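(* Let $(M,\mathcal{H},\langle\cdot,\cdot\rangle)$ be a quaternionic contact manifold of dimension $4n+3$, locally $\mathcal{H}=\bigcap_{i=1}^3\ker\eta_i$ with associated almost complex structures $I_1,I_2,I_3$ and Reeb vector fields $V_1,V_2,V_3$. Let $\{X_1,\dots,X_{4n},V_1,V_2,V_3\}$ be a local orthonormal frame (for the Riemannian metric $g$) near a point such that $\{X_1,\dots,X_{4n}\}$ is an $Sp(n)Sp(1)$-frame, and let $\{\theta_1,\dots,\theta_{4n},\eta_1,\eta_2,\eta_3\}$ be its dual coframe. Then the Popp measure $\mathcal{P}$ of the subriemannian manifold $(M,\mathcal{H},\langle\cdot,\cdot\rangle)$ is $$\mathcal{P}=\frac{1}{(16n)^{3/2}}\,\theta_1\wedge\cdots\wedge\theta_{4n}\wedge\eta_1\wedge\eta_2\wedge\eta_3 .$$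
   Context: A quaternionic contact (qc) manifold $(M,\mathcal{H},\langle\cdot,\cdot\rangle)$ is a connected orientable manifold of dimension $4n+3$ with a corank-3 distribution $\mathcal{H}$ and a smooth fiberwise inner product $\langle\cdot,\cdot\rangle$ on $\mathcal{H}$ such that locally $\mathcal{H}=\bigcap_{i=1}^3\ker\eta_i$ for 1-forms $\eta_1,\eta_2,\eta_3$, and there are almost complex structures $I_1,I_2,I_3$ on $\mathcal{H}$ with $I_i^2=I_1I_2I_3=-\mathrm{Id}$ and $2\langle I_iX,Y\rangle=d\eta_i(X,Y)$ for horizontal $X,Y$. The Reeb vector fields $V_1,V_2,V_3$ are defined by $\eta_i(V_j)=\delta_{ij}$ and $(V_i\lrcorner d\eta_j)|_{\mathcal{H}}=-(V_j\lrcorner d\eta_i)|_{\mathcal{H}}$ (for $n=1$ their existence is assumed). The Riemannian metric $g$ extends $\langle\cdot,\cdot\rangle$ by $g=\langle\cdot,\cdot\rangle\oplus(\eta_1^2+\eta_2^2+\eta_3^2)$, with $\mathcal{H}\perp\mathrm{span}\{V_i\}$. An $Sp(n)Sp(1)$-frame is an orthonormal frame $\{X_1,\dots,X_{4n}\}$ of $\mathcal{H}$ with $I_iX_{4k+1}=X_{4k+i+1}$ for $k=0,\dots,n-1$, $i=1,2,3$. The Popp measure of a regular step-two subriemannian manifold, expressed in a local frame $\{X_1,\dots,X_{4n},V_1,V_2,V_3\}$ with $X_\alpha$ orthonormal in $\mathcal{H}$ and dual coframe $\{\theta_\alpha,\eta_i\}$, is $\frac{1}{\sqrt{\det B}}\theta_1\wedge\cdots\wedge\theta_{4n}\wedge\eta_1\wedge\eta_2\wedge\eta_3$,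 where $B_{ij}=\sum_{\alpha,\beta}b^i_{\alpha\beta}b^j_{\alpha\beta}$ and $b^i_{\alpha\beta}=\eta_i([X_\alpha,X_\beta])$. *)

(* Defs.v *)
(* Local (chart) model of a quaternionic contact manifold: an open set U of
   R^(4n+3) (points and tangent vectors are row vectors 'rV[R]_(4n+3)). *)
From HB Require Import structures.
From mathcomp Require Import all_boot all_order all_algebra.
From mathcomp Require Import all_classical all_reals all_analysis.
Set Implicit Arguments. Unset Strict Implicit. Unset Printing Implicit Defensive.
Import Order.TTheory GRing.Theory Num.Theory.
Import numFieldNormedType.Exports.
Local Open Scope classical_set_scope.
Local Open Scope ring_scope.

Section QC.
Variables (R : realType) (N : nat).
Local Notation V := 'rV[R]_N.

(* pairing of a covector (1-form value) with a vector *)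
Definition pair (w v : V) : R := \sum_(k < N) w 0 k * v 0 k.

Definition lie_bracket (X Y : V -> V) (p : V) : V :=
  'D_(X p) Y p - 'D_(Y p) X p.

(* exterior derivative of a 1-form eta, evaluated at p on (v,w):
   d eta(v,w) = v(eta(w)) - w(eta(v)) for constant v, w
   (convention d eta(X,Y) = X eta(Y) - Y eta(X) - eta([X,Y])) *)
Definition dform (eta : V -> V) (p : V) (v w : V) : R :=
  'D_v (fun q => pair (eta q) w) p - 'D_w (fun q => pair (eta q) v) p.

Definition horizontal (eta : 'I_3 -> V -> V) (p v : V) : Prop :=
  forall i, pair (eta i p) v = 0.

Definition qc_local_frame (n : nat) (U : set V)
  (eta : 'I_3 -> V -> V)
  (I : 'I_3 -> V -> V -> V)
  (gH : V -> V -> V -> R)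
  (Vr : 'I_3 -> V -> V)
  (X : 'I_(4 * n) -> V -> V)
  : Prop :=
  [/\ (0 < n)%N, N = (4 * n + 3)%N, open U &
   forall p, U p ->
   (
       (forall i, differentiable (eta i) p) /\
       (forall a, differentiable (X a) p) /\
       (forall i, differentiable (Vr i) p) /\
       ((forall a u v w, horizontal eta p u -> horizontal eta p v ->
          horizontal eta p w ->
          gH p (a *: u + v) w = a * gH p u w + gH p v w)
       /\ (forall u v, horizontal eta p u -> horizontal eta p v ->
          gH p u v = gH p v u)
       /\ (forall u, horizontal eta p u -> u != 0 -> 0 < gH p u u)) /\
       ((forall i v, horizontal eta p v -> horizontal eta p (I i p v))
       /\ (forall i a u v, horizontal eta p u -> horizontal eta p v ->
            I i p (a *: u + v) = a *: I i p u + I i p v)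
       /\ (forall i v, horizontal eta p v -> I i p (I i p v) = - v)
       /\ (forall v, horizontal eta p v ->
            I 0 p (I 1 p (I 2 p v)) = - v)) /\
       (forall i u v, horizontal eta p u -> horizontal eta p v ->
          2 * gH p (I i p u) v = dform (eta i) p u v) /\
       ((forall i j, pair (eta i p) (Vr j p) = (i == j)%:R)
       /\ (forall i j w, horizontal eta p w ->
            dform (eta j) p (Vr i p) w = - dform (eta i) p (Vr j p) w)) /\
       (* {X_alpha} orthonormal frame of H (hence {X, Vr} is g-orthonormal) *)
       ((forall a, horizontal eta p (X a p))
       /\ (forall a b, gH p (X a p) (X b p) = (a == b)%:R)
       (* Sp(n)Sp(1)-frame: I_i X_{4k+1} = X_{4k+i+1} (0-based below) *)
       /\ (forall (k : 'I_n) (i : 'I_3) (a b : 'I_(4 * n)),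
            val a = (4 * k)%N -> val b = (4 * k + i.+1)%N ->
            I i p (X a p) = X b p)))].

Definition bcoef (n : nat) (eta : 'I_3 -> V -> V) (X : 'I_(4 * n) -> V -> V)
  (p : V) (i : 'I_3) (a b : 'I_(4 * n)) : R :=
  pair (eta i p) (lie_bracket (X a) (X b) p).

Definition Bmx (n : nat) (eta : 'I_3 -> V -> V) (X : 'I_(4 * n) -> V -> V)
  (p : V) : 'M[R]_3 :=
  \matrix_(i, j) \sum_(a < 4 * n) \sum_(b < 4 * n)
     bcoef eta X p i a b * bcoef eta X p j a b.

(* Popp measure in the frame: (1/sqrt(det B)) theta_1 /\ ... /\ eta_3;
   popp_coeff is its coefficient relative to the coframe volume form. *)
Definition popp_coeff (n : nat) (eta : 'I_3 -> V -> V)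
  (X : 'I_(4 * n) -> V -> V) (p : V) : R :=
  1 / Num.sqrt (\det (Bmx eta X p)).

End QC.

(* Main.v *)
Require Import Defs.
From HB Require Import structures.
From mathcomp Require Import all_boot all_order all_algebra.
From mathcomp Require Import all_classical all_reals all_analysis.
From mathcomp Require Import ring lra zify.
Import Order.TTheory GRing.Theory Num.Theory.
Import numFieldNormedType.Exports.
Local Open Scope classical_set_scope.
Local Open Scope ring_scope.

Section An.
Variables (R : realType) (N : nat).
Local Notation V := 'rV[R]_N.

Lemma comp_derivable (f : V -> V) p v k :
  differentiable f p -> derivable (fun q => f q 0 k) p v.
Proof.
by move=> df; move/derivable_mxP: (@diff_derivable _ _ _ f p v df); apply.
Qed.

Lemma comp_derive (f : V -> V) p v k :
  differentiable f p -> 'D_v (fun q => f q 0 k) p = ('D_v f p) 0 k.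
Proof.
by move=> df; rewrite (derive_mx (@diff_derivable _ _ _ f p v df)) mxE.
Qed.

Lemma D_pair (f g : V -> V) p v : differentiable f p -> differentiable g p ->
  'D_v (fun q => pair (f q) (g q)) p = pair ('D_v f p) (g p) + pair (f p) ('D_v g p).
Proof.
move=> df dg.
have -> : (fun q => pair (f q) (g q)) =
   \sum_(k < N) (fun q => (fun q => f q 0 k) q * (fun q => g q 0 k) q).
  by apply/funext => q; rewrite /pair fct_sumE.
rewrite derive_sum; last first.
  by move=> k; apply: derivableM; apply: comp_derivable.
rewrite /pair -big_split /=; apply: eq_bigr => k _.
rewrite deriveM; last 2 first.
- exact: comp_derivable.
- exact: comp_derivable.
have E1 := comp_derive f p v k df; have E2 := comp_derive g p v k dg.
simpl in E1, E2. rewrite E1 E2.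
rewrite addrC; congr (_ + _); exact: mulrC.
Qed.

Lemma pair0r (w : V) : pair w 0 = 0.
Proof. by rewrite /pair big1 // => k _; rewrite mxE mulr0. Qed.

Lemma pairlin (w u u' : V) (a : R) : pair w (a *: u + u') = a * pair w u + pair w u'.
Proof.
rewrite /pair mulr_sumr -big_split; apply: eq_bigr => k _.
by rewrite !mxE mulrDr mulrCA.
Qed.

Lemma pairB (w u u' : V) : pair w (u - u') = pair w u - pair w u'.
Proof.
rewrite /pair -sumrB; apply: eq_bigr => k _.
by rewrite !mxE mulrBr.
Qed.

Lemma pair_zero_D (e Y : V -> V) (U : set V) p v : open U -> U p ->
  (forall q, U q -> pair (e q) (Y q) = 0) -> differentiable e p -> differentiable Y p ->
  pair (e p) ('D_v Y p) = - 'D_v (fun q => pair (e q) (Y p)) p.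
Proof.
move=> oU Up H0 de dY.
have Z : 'D_v (fun q => pair (e q) (Y q)) p = 0.
  rewrite (@near_eq_derive _ _ _ _ (cst 0)); first exact: derive_cst.
  have nU : nbhs p U by apply: open_nbhs_nbhs.
  near=> q; apply: H0; near: q; exact: nU.
rewrite D_pair // in Z.
have := @D_pair e (cst (Y p)) p v de (differentiable_cst _ _).
rewrite derive_cst => ->.
rewrite pair0r addr0.
by apply/eqP; rewrite -subr_eq0 opprK addrC; apply/eqP; exact: Z.
Unshelve. all: by end_near.
Qed.

Lemma bcoef_eq (e Ya Yb : V -> V) (U : set V) p : open U -> U p ->
  (forall q, U q -> pair (e q) (Ya q) = 0) ->
  (forall q, U q -> pair (e q) (Yb q) = 0) ->
  differentiable e p -> differentiable Ya p -> differentiable Yb p ->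
  pair (e p) (lie_bracket Ya Yb p) = - dform e p (Ya p) (Yb p).
Proof.
move=> oU Up ha hb de da db.
rewrite /lie_bracket pairB (pair_zero_D e Yb U p (Ya p) oU Up hb de db) (pair_zero_D e Ya U p (Yb p) oU Up ha de da).
by rewrite /dform opprB opprK addrC.
Qed.
End An.

Set Implicit Arguments. Unset Strict Implicit.
Section Alg.
Variables (R : realType) (V : lmodType R).
Variables (Hz : V -> Prop) (G : V -> V -> R) (J : 'I_3 -> V -> V)
  (Om : 'I_3 -> V -> V -> R).
Hypothesis Hz0 : Hz 0.
Hypothesis HzL : forall a u v, Hz u -> Hz v -> Hz (a *: u + v).
Hypothesis Glin : forall a u v w, Hz u -> Hz v -> Hz w ->
  G (a *: u + v) w = a * G u w + G v w.
Hypothesis Gsym : forall u v, Hz u -> Hz v -> G u v = G v u.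
Hypothesis JH : forall i v, Hz v -> Hz (J i v).
Hypothesis Jlin : forall i a u v, Hz u -> Hz v -> J i (a *: u + v) = a *: J i u + J i v.
Hypothesis Jsq : forall i v, Hz v -> J i (J i v) = - v.
Hypothesis J012 : forall v, Hz v -> J 0 (J 1 (J 2 v)) = - v.
Hypothesis Gom : forall i u v, Hz u -> Hz v -> 2 * G (J i u) v = Om i u v.
Hypothesis Omanti : forall i u v, Om i u v = - Om i v u.

Lemma HzN u : Hz u -> Hz (- u).
Proof. by move=> hu; have := HzL (-1) hu Hz0; rewrite scaleN1r addr0. Qed.

Lemma HzZ a u : Hz u -> Hz (a *: u).
Proof. by move=> hu; have := HzL a hu Hz0; rewrite addr0. Qed.

Lemma dbl0 (T : zmodType) (x : T) : x = x + x -> x = 0.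
Proof. by move=> h; rewrite -(subrr x) {2}h addrK. Qed.

Lemma J0 i : J i 0 = 0.
Proof.
by apply: dbl0; have := Jlin i 1 Hz0 Hz0; rewrite scaler0 addr0 scale1r.
Qed.

Lemma JN i u : Hz u -> J i (- u) = - J i u.
Proof.
by move=> hu; have := Jlin i (-1) hu Hz0; rewrite scaleN1r !addr0 J0 addr0 scaleN1r.
Qed.

Lemma JZ i a u : Hz u -> J i (a *: u) = a *: J i u.
Proof. by move=> hu; have := Jlin i a hu Hz0; rewrite !addr0 J0 addr0. Qed.

Lemma GZl a u w : Hz u -> Hz w -> G (a *: u) w = a * G u w.
Proof.
move=> hu hw; have := Glin a hu Hz0 hw; rewrite addr0 => ->.
suff -> : G 0 w = 0 by rewrite addr0.
by apply: dbl0; have := Glin 1 Hz0 Hz0 hw; rewrite scaler0 addr0 mul1r.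
Qed.

Lemma GZr a u w : Hz u -> Hz w -> G w (a *: u) = a * G w u.
Proof. by move=> hu hw; rewrite (Gsym hw (HzZ a hu)) GZl // Gsym. Qed.

Lemma GJ i u v : Hz u -> Hz v -> G (J i u) v = - G u (J i v).
Proof.
move=> hu hv; have h1 := Gom i hu hv; have h2 := Gom i hv hu.
rewrite Omanti -h2 in h1; rewrite [G u _](Gsym hu (JH i hv)); lra.
Qed.

Lemma GuJu i u : Hz u -> G u (J i u) = 0.
Proof.
move=> hu; have := GJ i hu hu; rewrite (Gsym (JH i hu) hu); lra.
Qed.

Lemma J01 v : Hz v -> J 0 (J 1 v) = J 2 v.
Proof.
move=> hv; have E := J012 (JH 2 hv).
rewrite (Jsq 2 hv) (JN 1 hv) (JN 0 (JH 1 hv)) in E; exact: oppr_inj E.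
Qed.

Lemma J12 v : Hz v -> J 1 (J 2 v) = J 0 v.
Proof.
move=> hv; have E := congr1 (J 0) (J012 hv).
rewrite (Jsq 0 (JH 1 (JH 2 hv))) (JN 0 hv) in E; exact: oppr_inj E.
Qed.

Lemma J02 v : Hz v -> J 0 (J 2 v) = - J 1 v.
Proof. by move=> hv; rewrite -(J01 hv) (Jsq 0 (JH 1 hv)). Qed.

Lemma J10 v : Hz v -> J 1 (J 0 v) = - J 2 v.
Proof. by move=> hv; rewrite -(J12 hv) (Jsq 1 (JH 2 hv)). Qed.

Lemma J21 v : Hz v -> J 2 (J 1 v) = - J 0 v.
Proof. by move=> hv; rewrite -(J01 (JH 1 hv)) (Jsq 1 hv) (JN 0 hv). Qed.

Lemma J20 v : Hz v -> J 2 (J 0 v) = J 1 v.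
Proof.
by move=> hv; rewrite -(J01 (JH 0 hv)) (J10 hv) (JN 0 (JH 2 hv)) (J02 hv) opprK.
Qed.

Lemma I3cases (i : 'I_3) : i = 0 \/ i = 1 \/ i = 2.
Proof.
case: i => [[|[|[|m]]] Hi]; [left|right;left|right;right|by []]; exact: val_inj.
Qed.

Lemma quat i j : i != j -> exists l (s : R), (s = 1 \/ s = -1) /\
  forall v, Hz v -> J i (J j v) = s *: J l v.
Proof.
have H1 : forall x : V, x = 1 *: x by move=> x; rewrite scale1r.
have H2 : forall x : V, - x = (-1) *: x by move=> x; rewrite scaleN1r.
case: (I3cases i) => [->|[->|->]]; case: (I3cases j) => [->|[->|->]] // _.
- by exists 2, 1; split; [left|move=> v hv; rewrite J01 // -H1].
- by exists 1, (-1); split; [right|move=> v hv; rewrite J02 // -H2].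
- by exists 2, (-1); split; [right|move=> v hv; rewrite J10 // -H2].
- by exists 0, 1; split; [left|move=> v hv; rewrite J12 // -H1].
- by exists 1, 1; split; [left|move=> v hv; rewrite J20 // -H1].
- by exists 0, (-1); split; [right|move=> v hv; rewrite J21 // -H2].
Qed.

Lemma GJJ i j u : Hz u -> G (J i u) (J j u) = (i == j)%:R * G u u.
Proof.
move=> hu; rewrite (GJ i hu (JH j hu)).
have [<-|ne] := eqVneq i j.
  by rewrite (Jsq i hu) -scaleN1r (GZr _ hu hu) /= mulN1r opprK mul1r.
have [l [s [_ E]]] := quat ne.
by rewrite (E _ hu) (GZr _ (JH l hu) hu) (GuJu l hu) mulr0 oppr0 mul0r.
Qed.

Variables (n : nat) (X : 'I_(4 * n) -> V).
Hypothesis XH : forall a, Hz (X a).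
Hypothesis Xon : forall a b, G (X a) (X b) = (a == b)%:R.
Hypothesis Sp : forall (k : 'I_n) (i : 'I_3) (a b : 'I_(4 * n)),
  val a = (4 * k)%N -> val b = (4 * k + i.+1)%N -> J i (X a) = X b.

Lemma frame_pm i a : exists c (s : R), (s = 1 \/ s = -1) /\ J i (X a) = s *: X c.
Proof.
pose k := (a %/ 4)%N.
have kn : (k < n)%N by have := ltn_ord a; rewrite /k; lia.
have ex : forall m : nat, (m < 4)%N -> exists b : 'I_(4 * n), val b = (4 * k + m)%N.
  move=> m hm; have hb : (4 * k + m < 4 * n)%N by lia.
  by exists (Ordinal hb).
have [a0 ha0] := ex 0%N isT; rewrite addn0 in ha0.
have Ja : forall l, exists b, J l (X a0) = X b.
  move=> l; have [b hb] := ex l.+1 (ltn_ord l).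
  by exists b; apply: (Sp (k := Ordinal kn)).
have da := divn_eq a 4.
case r: (a %% 4)%N da => [|r'] da.
  have -> : a = a0 by apply: val_inj; rewrite /= ha0 /k; lia.
  have [b hb] := Ja i; exists b, 1; split; first by left.
  by rewrite hb scale1r.
have r3 : (r' < 3)%N by have := ltn_pmod a (isT : (0 < 4)%N); rewrite r.
have XA : X a = J (Ordinal r3) (X a0).
  by symmetry; apply: (Sp (k := Ordinal kn)) => //=; rewrite /k; lia.
rewrite XA.
have [<-|ne] := eqVneq i (Ordinal r3).
  by exists a0, (-1); split; [right|rewrite Jsq ?XH // scaleN1r].
have [l [s [hs E]]] := quat ne.
have [b hb] := Ja l.
by exists b, s; split => //; rewrite E ?XH // hb.
Qed.

Lemma parseval i j a :
  \sum_b G (J i (X a)) (X b) * G (J j (X a)) (X b) = G (J j (X a)) (J i (X a)).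
Proof.
have [c [s [_ E]]] := frame_pm i a; rewrite E (GZr _ (XH c) (JH j (XH a))).
under eq_bigr => b _ do rewrite (GZl s (XH c) (XH b)) Xon.
rewrite (bigD1 c) //= big1 ?addr0; first by rewrite eqxx mulr1.
by move=> b ne; rewrite eq_sym (negbTE ne) mulr0 mul0r.
Qed.

Lemma Bsum i j : \sum_(a < 4 * n) \sum_(b < 4 * n)
   ((-2) * G (J i (X a)) (X b)) * ((-2) * G (J j (X a)) (X b)) =
   (i == j)%:R * (16 * n)%:R.
Proof.
have h : forall a, \sum_(b < 4 * n)
   ((-2) * G (J i (X a)) (X b)) * ((-2) * G (J j (X a)) (X b)) = 4 * (i == j)%:R.
  move=> a.
  have m4 : (-2) * (-2) = 4 :> R by lra.
  under eq_bigr => b _ do rewrite mulrACA m4.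
  rewrite -mulr_sumr parseval (GJJ j i (XH a)) Xon eqxx mulr1 eq_sym //.
under eq_bigr => a _ do rewrite h.
rewrite sumr_const card_ord -mulr_natr natrM.
by case: (i == j); rewrite /= -[_ *+ (4 * n)]mulr_natr natrM; lra.
Qed.
End Alg.

Theorem lemma4p1 (R : realType) (n N : nat) (U : set 'rV[R]_N)
  (eta : 'I_3 -> 'rV[R]_N -> 'rV[R]_N) (I : 'I_3 -> 'rV[R]_N -> 'rV[R]_N -> 'rV[R]_N)
  (gH : 'rV[R]_N -> 'rV[R]_N -> 'rV[R]_N -> R) (Vr : 'I_3 -> 'rV[R]_N -> 'rV[R]_N)
  (X : 'I_(4 * n) -> 'rV[R]_N -> 'rV[R]_N) :
  qc_local_frame U eta I gH Vr X ->
  forall p, U p ->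
    popp_coeff eta X p = 1 / Num.sqrt (((16 * n)%:R : R) ^+ 3).
Proof.
case=> _ _ oU Hall p Up.
have [deta [dX [_ [[Glin [Gsym _]] [[JH [Jlin [Jsq J012]]] [Gom [_ [XH [Xon Sp]]]]]]]]] := Hall p Up.
have Hz0 : horizontal eta p 0 by move=> i; exact: pair0r.
have HzL : forall a u v, horizontal eta p u -> horizontal eta p v ->
    horizontal eta p (a *: u + v).
  by move=> a u v hu hv i; rewrite pairlin hu hv mulr0 addr0.
have Omanti : forall i u v, dform (eta i) p u v = - dform (eta i) p v u.
  by move=> i u v; rewrite /dform opprB.
have Hb : forall i a b, bcoef eta X p i a b = (-2) * gH p (I i p (X a p)) (X b p).
  move=> i a b; rewrite /bcoef (@bcoef_eq _ _ _ _ _ _ _ oU Up); last 5 first.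
  - by move=> q Uq; have [_ [_ [_ [_ [_ [_ [_ [XHq _]]]]]]]] := Hall q Uq; exact: XHq.
  - by move=> q Uq; have [_ [_ [_ [_ [_ [_ [_ [XHq _]]]]]]]] := Hall q Uq; exact: XHq.
  - exact: deta.
  - exact: dX.
  - exact: dX.
  by rewrite -Gom ?XH // mulNr.
have BE : Bmx eta X p = ((16 * n)%:R : R)%:M.
  apply/matrixP => i j; rewrite !mxE.
  under eq_bigr => a _ do under eq_bigr => b _ do rewrite !Hb.
  rewrite (Bsum Hz0 HzL Glin Gsym JH Jlin Jsq J012 Gom Omanti XH Xon Sp).
  by case: (i == j); rewrite /= ?mul1r ?mul0r.
by rewrite /popp_coeff BE det_scalar.
Qed.
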